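(* In the currency market model #1 described in the context, assume $\{\lambda^{ij}_t>0\}=\{\lambda^{ji}_t>0\}$ for all $i,j\le d$ and $t\in\mathbb T$. Then for every $t\in\mathbb T$ and every $\eta\in L^0(\mathbb M^d;\mathcal H_t)$ such that $F_t(\eta)\in N^0_t(F)$, one has $F_t(-\eta)=-F_t(\eta)$ a.s. (so condition $\mathbf{HN^0}$ holds, since $\mathcal A=\mathbb M^d$).
   Context: Let $T\in\mathbb N$, $\mathbb T=\{0,\dots,T\}$, $d\ge1$, $(\Omega,\mathcal F,\mathbb P)$ a complete probability space and $\mathbb H=(\mathcal H_t)_{t\in\mathbb T}$ a filtration with $\mathcal H_T\subset\mathcal F$. $\mathbb M^d$ denotes real $d\times d$ matrices, $\mathbb M^d_+$ those with nonnegative entries; $L^0(E;\mathcal G)$ denotes $E$-valued $\mathcal G$-measurable random variables. Let $S=(S_t)_{t\in\mathbb T}$ be an $\mathcal F$-measurable $(0,\infty)^d$-valued process and $\lambda=(\lambda_t)_{t\in\mathbb T}$ an $\mathcal F$-measurable $\mathbb M^d_+$-valued process (neither necessarily $\mathbb H$-adapted); set $\tau^{ji}_t=S^i_t/S^j_t$. For $\rho,\ell\in\mathbb M^d_+$ define $f(\cdot;\rho,\ell):\mathbb M^d\to\mathbb R^d$ by $f^i(a;\rho,\ell)=\sum_{j=1}^d a^{ji}\big(1+\ell^{ij}\mathbf 1_{\{a^{ji}<0\}}\big)-a^{ij}\rho^{ij}\big(1+\ell^{ij}\mathbf 1_{\{a^{ij}\ge0\}}\big)$, $i\le d$. Set $\mathcal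 A=\mathbb M^d$ and $F_t(a)=f(a;\tau_t,\lambda_t)$, $t\in\mathbb T$. Let $N_t(F)=\{F_t(\eta):\eta\in L^0(\mathbb M^d;\mathcal H_t)\}$ and $N^0_t(F)=N_t(F)\cap(-N_t(F))$. *)

(* Defs.v *)
From HB Require Import structures.
From mathcomp Require Import all_boot all_order all_algebra.
From mathcomp Require Import all_classical all_reals all_analysis.
Set Implicit Arguments. Unset Strict Implicit. Unset Printing Implicit Defensive.
Import Order.TTheory GRing.Theory Num.Theory.
Local Open Scope classical_set_scope.
Local Open Scope ring_scope.

Definition sub_sigma_algebra d (Omega : measurableType d) (G : set (set Omega)) :=
  sigma_algebra setT G /\ G `<=` measurable.

Definition filtration d (Omega : measurableType d) (T : nat)
    (H : nat -> set (set Omega)) :=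
  (forall t, (t <= T)%N -> sub_sigma_algebra (H t)) /\
  (forall s t, (s <= t)%N -> (t <= T)%N -> H s `<=` H t).

Definition Gmeas d (Omega : measurableType d) (R : realType)
    (G : set (set Omega)) (X : Omega -> R) :=
  forall B : set R, measurable B -> G (X @^-1` B).

Definition L0mx d (Omega : measurableType d) (R : realType) (n : nat)
    (G : set (set Omega)) (eta : Omega -> 'M[R]_n) :=
  forall i j, Gmeas G (fun w => eta w i j).

Definition ind {R : realType} (b : bool) : R := if b then 1 else 0.

Definition fcost (R : realType) (n : nat) (a rho l : 'M[R]_n) : 'rV[R]_n :=
  \row_(i < n) \sum_(j < n)
     (a j i * (1 + l i j * ind (a j i < 0))
      - a i j * rho i j * (1 + l i j * ind (0 <= a i j))).

Definition tau (R : realType) (n : nat) (s : 'rV[R]_n) : 'M[R]_n :=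
  \matrix_(j < n, i < n) (s 0 i / s 0 j).

Definition Fmap d (Omega : measurableType d) (R : realType) (n : nat)
    (S : nat -> Omega -> 'rV[R]_n) (lam : nat -> Omega -> 'M[R]_n) (t : nat)
    (eta : Omega -> 'M[R]_n) : Omega -> 'rV[R]_n :=
  fun w => fcost (eta w) (tau (S t w)) (lam t w).

(* X in N_t(F) (elements of L^0, i.e. up to P-a.s. equality) *)
Definition inN d (Omega : measurableType d) (R : realType) (n : nat)
    (P : probability Omega R) (H : nat -> set (set Omega))
    (S : nat -> Omega -> 'rV[R]_n) (lam : nat -> Omega -> 'M[R]_n) (t : nat)
    (X : Omega -> 'rV[R]_n) :=
  exists eta, L0mx (H t) eta /\ {ae P, forall w, X w = Fmap S lam t eta w}.

Definition inN0 d (Omega : measurableType d) (R : realType) (n : nat)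
    (P : probability Omega R) (H : nat -> set (set Omega))
    (S : nat -> Omega -> 'rV[R]_n) (lam : nat -> Omega -> 'M[R]_n) (t : nat)
    (X : Omega -> 'rV[R]_n) :=
  inN P H S lam t X /\ inN P H S lam t (fun w => - X w).

(* Main.v *)
Require Import Defs.
From HB Require Import structures.
From mathcomp Require Import all_boot all_order all_algebra.
From mathcomp Require Import all_classical all_reals all_analysis.
Import Order.TTheory GRing.Theory Num.Theory.
Local Open Scope classical_set_scope.
Local Open Scope ring_scope.
From mathcomp Require Import ring lra.

Section K.
Variables (R : realType) (n : nat) (s : 'rV[R]_n) (l : 'M[R]_n).
Hypothesis spos : forall i, 0 < s 0 i.
Hypothesis lpos : forall i j, 0 <= l i j.
Hypothesis lsym : forall i j, 0 < l i j -> 0 < l j i.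

Definition V (x : 'rV[R]_n) := \sum_i s 0 i * x 0 i.
Definition h (a : 'M[R]_n) i j :=
  s 0 j * (a i j * (l i j * ind (0 <= a i j) - l j i * ind (a i j < 0))).

Lemma h_ge0 a i j : 0 <= h a i j.
Proof.
rewrite /h /ind; apply: mulr_ge0; first exact: ltW.
case: (ltP (a i j) 0) => H.
  rewrite mulr0 mulr1 sub0r mulrN -mulNr.
  apply: mulr_ge0 => //; rewrite oppr_ge0; exact: ltW.
by rewrite mulr1 mulr0 subr0; apply: mulr_ge0.
Qed.

Lemma Vf a : V (fcost a (tau s) l) = - \sum_i \sum_j h a i j.
Proof.
rewrite /V.
pose A := fun i j => s 0 i * (a j i * (1 + l i j * ind (a j i < 0))).
pose B := fun i j => s 0 i * (a i j * tau s i j * (1 + l i j * ind (0 <= a i j))).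
have E1 : \sum_i s 0 i * fcost a (tau s) l 0 i =
   \sum_i \sum_j A i j - \sum_i \sum_j B i j.
  rewrite -sumrB; apply: eq_bigr => i _; rewrite mxE mulr_sumr -sumrB.
  by apply: eq_bigr => j _; rewrite mulrBr.
rewrite E1 [X in X - _]exchange_big /=.
rewrite -sumrB -sumrN; apply: eq_bigr => i _.
rewrite -sumrB -sumrN; apply: eq_bigr => j _.
rewrite /h /A /B !mxE.
have := spos i; have := spos j; move=> Hj Hi.
field; by rewrite gt_eqF.
Qed.

Lemma VN x : V (- x) = - V x.
Proof. rewrite /V -sumrN; apply: eq_bigr => i _; by rewrite mxE mulrN. Qed.

Lemma zero_costs a : V (fcost a (tau s) l) = 0 ->
  forall i j, a i j != 0 -> l i j = 0 /\ l j i = 0.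
Proof.
rewrite Vf => /eqP; rewrite oppr_eq0 => /eqP H0 i j Hij.
have H1 : \sum_j h a i j = 0.
  apply: (psumr_eq0P (P := predT) (fun i _ => sumr_ge0 _ (fun j _ => h_ge0 a i j)) H0) => //.
have H2 : h a i j = 0 by apply: (psumr_eq0P (P := predT) (fun j _ => h_ge0 a i j) H1).
move: H2; rewrite /h /ind.
have Hs := spos j.
have sym0 : forall p q, l p q = 0 -> l q p = 0.
  move=> p q Hpq; apply/eqP; rewrite eq_le lpos andbT leNgt; apply/negP => /lsym.
  by rewrite Hpq ltxx.
case: (ltP (a i j) 0) => H.
  rewrite mulr0 mulr1 sub0r => /eqP.
  rewrite !mulf_eq0 gt_eqF //= (negbTE Hij) /= oppr_eq0 => /eqP L.
  by split => //; apply: sym0.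
rewrite mulr1 mulr0 subr0 => /eqP.
rewrite !mulf_eq0 gt_eqF //= (negbTE Hij) /= => /eqP L.
by split => //; apply: sym0.
Qed.

Lemma oddterm (x p c : R) : (x = 0 \/ p = 0) -> (-x) * c = - (x * c) -> True.
Proof. by []. Qed.

Lemma key a b : fcost a (tau s) l = - fcost b (tau s) l ->
  fcost (- a) (tau s) l = - fcost a (tau s) l.
Proof.
move=> E.
have HV : V (fcost a (tau s) l) = 0.
  have g1 := Vf a; have g2 := Vf b.
  have n1 : 0 <= \sum_i \sum_j h a i j by apply: sumr_ge0 => i _; apply: sumr_ge0 => j _; apply: h_ge0.
  have n2 : 0 <= \sum_i \sum_j h b i j by apply: sumr_ge0 => i _; apply: sumr_ge0 => j _; apply: h_ge0.
  have : V (fcost a (tau s) l) = - V (fcost b (tau s) l) by rewrite E VN.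
  rewrite g1 g2 => E2; lra.
have Z := zero_costs a HV.
have T0 : forall i j, a i j = 0 \/ l i j = 0.
  move=> i j; case: (eqVneq (a i j) 0) => [->|Hn]; [by left | right; exact: (Z _ _ Hn).1].
have T1 : forall i j, a j i = 0 \/ l i j = 0.
  move=> i j; case: (eqVneq (a j i) 0) => [->|Hn]; [by left | right; exact: (Z _ _ Hn).2].
apply/rowP => i; rewrite !mxE -sumrN; apply: eq_bigr => j _; rewrite !mxE.
case: (T0 i j) => E1; case: (T1 i j) => E2; rewrite ?E1 ?E2 ?oppr0 ?mul0r ?mulr0; ring.
Qed.
End K.
Theorem mainTheorem9 (T : nat) (n : nat) (dsp : measure_display)
    (Omega : measurableType dsp) (R : realType) (P : probability Omega R)
    (H : nat -> set (set Omega))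
    (S : nat -> Omega -> 'rV[R]_n) (lam : nat -> Omega -> 'M[R]_n) :
  (0 < n)%N ->
  measure_is_complete P ->
  filtration T H ->
  (forall t, (t <= T)%N -> forall i, measurable_fun setT (fun w => S t w 0 i)) ->
  (forall t, (t <= T)%N -> forall w i, 0 < S t w 0 i) ->
  (forall t, (t <= T)%N -> forall i j, measurable_fun setT (fun w => lam t w i j)) ->
  (forall t, (t <= T)%N -> forall w i j, 0 <= lam t w i j) ->
  (forall t, (t <= T)%N -> forall i j,
      [set w | 0 < lam t w i j] = [set w | 0 < lam t w j i]) ->
  forall t, (t <= T)%N ->
  forall eta : Omega -> 'M[R]_n, L0mx (H t) eta ->
  inN0 P H S lam t (Fmap S lam t eta) ->
  {ae P, forall w, Fmap S lam t (fun w' => - eta w') w = - Fmap S lam t eta w}.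
Proof.
move=> n0 _ _ _ hS _ hL hsym t ht eta _ [_ [xi [_ Hae]]].
apply: filterS Hae => w /= Hw.
have sp : forall i, 0 < S t w 0 i by move=> i; apply: hS.
have lp : forall i j, 0 <= lam t w i j by move=> i j; apply: hL.
have ls : forall i j, 0 < lam t w i j -> 0 < lam t w j i.
  move=> i j Hl.
  have : [set w | 0 < lam t w i j] w by [].
  by rewrite (hsym t ht i j).
have E : fcost (eta w) (tau (S t w)) (lam t w) = - fcost (xi w) (tau (S t w)) (lam t w).
  by move: Hw; rewrite /Fmap => <-; rewrite opprK.
have K := @key _ _ _ _ sp lp ls _ _ E. rewrite /Fmap. exact K.
Qed.
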